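(* Let $M$ be the commutative monoid with zero defined below. For every right congruence $\rho$ of finite index on $M$ with $\mathcal{L}\subseteq\rho$ we have $(d,e)\in\rho$, although $(d,e)\notin\mathcal{L}$. Consequently the action of $M$ on its $\mathcal{L}$-classes is not residually finite.
   Context: Let $\tau:\mathbb{Z}\setminus\{0\}\to\mathbb{Z}$, $\tau(2^k(2r+1))=\frac{2}{3}(2^{2\lceil k/2\rceil}-1)$ ($k,r\in\mathbb{Z}$, $k\ge0$). Let $M$ be the commutative monoid with zero $0$ given by generators $a,a^{-1},b_i,c_i$ ($i\in\mathbb{Z}$), $d,e$ and relations $aa^{-1}=a^{-1}a=1$; $b_ic_j=d$ if $i=j$ and $b_ic_j=a^{\tau(j-i)}e$ if $i\neq j$; and $b_ib_j=b_id=b_ie=c_jc_k=c_jd=c_je=dd=de=ee=0$ for all $i,j,k\in\mathbb{Z}$. Its elements have distinct normal forms $a^p$, $a^pb_i$, $a^pc_i$, $a^pd$, $a^pe$ ($p,i\in\mathbb{Z}$) and $0$. $x\mathcal{L}y$ iff $Mx=My$; $M$ acts on $M/\mathcal{L}$ by $L_x\cdot m=L_{xm}$; this action is residually finite iff for all $(s,t)\notin\mathcal{L}$ there is a finite-index right congruence containing $\mathcal{L}$ but not $(s,t)$. *)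

(* Defs.v *)
(* the monoid M is given concretely by its normal forms. *)
From Stdlib Require Import ZArith List.
Open Scope Z_scope.

Fixpoint pval2 (p : positive) : nat :=
  match p with xO q => S (pval2 q) | _ => O end.

(* tau(2^k(2r+1)) = 2/3 (2^(2 ceil(k/2)) - 1); tau 0 is never used (set to 0). *)
Definition tau (n : Z) : Z :=
  match n with
  | Z0 => 0
  | Zpos p | Zneg p =>
      let k := pval2 p in
      2 * ((2 ^ (2 * Z.of_nat ((k + 1) / 2)) - 1) / 3)
  end.

(* Normal forms: a^p, a^p b_i, a^p c_i, a^p d, a^p e, 0 *)
Inductive M : Type :=
| mA : Z -> M
| mB : Z -> Z -> M
| mC : Z -> Z -> M
| mD : Z -> M
| mE : Z -> M
| mZero : M.

Definition shift (p : Z) (x : M) : M :=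
  match x with
  | mA q => mA (p + q)
  | mB q i => mB (p + q) i
  | mC q i => mC (p + q) i
  | mD q => mD (p + q)
  | mE q => mE (p + q)
  | mZero => mZero
  end.

Definition bc (p i q j : Z) : M :=
  if Z.eq_dec i j then mD (p + q) else mE (p + q + tau (j - i)).

Definition mul (x y : M) : M :=
  match x, y with
  | mA p, _ => shift p y
  | _, mA q => shift q x
  | mB p i, mC q j => bc p i q j
  | mC q j, mB p i => bc p i q j
  | _, _ => mZero
  end.

Definition one : M := mA 0.
Definition d : M := mD 0.
Definition e : M := mE 0.

Definition Lrel (x y : M) : Prop :=
  forall z, (exists u, z = mul u x) <-> (exists u, z = mul u y).

Definition right_congruence (rho : M -> M -> Prop) : Prop :=
  (forall x, rho x x) /\
  (forall x y, rho x y -> rho y x) /\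
  (forall x y z, rho x y -> rho y z -> rho x z) /\
  (forall x y m, rho x y -> rho (mul x m) (mul y m)).

Definition finite_index (rho : M -> M -> Prop) : Prop :=
  exists l : list M, forall x, exists y, In y l /\ rho x y.

Definition L_action_residually_finite : Prop :=
  forall s t, ~ Lrel s t ->
    exists rho, right_congruence rho /\ finite_index rho /\
      (forall x y, Lrel x y -> rho x y) /\ ~ rho s t.

(* Main.v *)
Require Import Defs.
From Stdlib Require Import ZArith List Lia Classical ClassicalEpsilon.

Lemma pigeon (l : list M) (f : nat -> M) :
  (forall n, In (f n) l) -> exists n m, n <> m /\ f n = f m.
Proof.
  intros Hf. apply NNPP; intro Hn.
  assert (HND : NoDup (map f (seq 0 (S (length l))))).
  { apply NoDup_map_NoDup_ForallPairs; [|apply seq_NoDup].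
    intros x y _ _ Hxy. destruct (Nat.eq_dec x y) as [|Hne]; auto.
    exfalso; apply Hn; exists x, y; auto. }
  assert (Hinc : incl (map f (seq 0 (S (length l)))) l).
  { intros z Hz. apply in_map_iff in Hz. destruct Hz as [n [<- _]]. apply Hf. }
  pose proof (NoDup_incl_length HND Hinc) as Hle.
  rewrite length_map, length_seq in Hle. lia.
Qed.

Lemma LE (t : Z) : Lrel (mE t) e.
Proof.
  intro z; split; intros [u Hu]; subst z.
  - destruct u; simpl.
    + exists (mA (z + t)). simpl. f_equal. lia.
    + exists mZero; reflexivity.
    + exists mZero; reflexivity.
    + exists mZero; reflexivity.
    + exists mZero; reflexivity.
    + exists mZero; reflexivity.
  - destruct u; simpl.
    + exists (mA (z - t)). simpl. f_equal. lia.
    + exists mZero; reflexivity.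
    + exists mZero; reflexivity.
    + exists mZero; reflexivity.
    + exists mZero; reflexivity.
    + exists mZero; reflexivity.
Qed.

Lemma part1 : forall rho : M -> M -> Prop,
      right_congruence rho -> finite_index rho ->
      (forall x y, Lrel x y -> rho x y) -> rho d e.
Proof.
  intros rho [Hr [Hs [Ht Hm]]] [l Hl] HL.
  set (f := fun n : nat => proj1_sig (constructive_indefinite_description _
              (Hl (mB 0 (Z.of_nat n))))).
  assert (Hf : forall n, In (f n) l /\ rho (mB 0 (Z.of_nat n)) (f n)).
  { intro n. unfold f. destruct (constructive_indefinite_description _ _). simpl. auto. }
  destruct (pigeon l f (fun n => proj1 (Hf n))) as [n [m [Hnm Hfe]]].
  assert (Hb : rho (mB 0 (Z.of_nat n)) (mB 0 (Z.of_nat m))).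
  { eapply Ht; [apply (proj2 (Hf n))|]. rewrite Hfe. apply Hs, (proj2 (Hf m)). }
  specialize (Hm _ _ (mC 0 (Z.of_nat m)) Hb). simpl in Hm. unfold bc in Hm.
  destruct (Z.eq_dec (Z.of_nat n) (Z.of_nat m)) as [E|_]; [lia|].
  destruct (Z.eq_dec (Z.of_nat m) (Z.of_nat m)) as [_|C]; [|congruence].
  apply Hs in Hm. eapply Ht; [exact Hm|]. apply HL, LE.
Qed.

Lemma part2 : ~ Lrel d e.
Proof.
  intro H. destruct (proj1 (H d) (ex_intro _ one eq_refl)) as [u Hu].
  destruct u; simpl in Hu; discriminate.
Qed.

Theorem mainTheorem15 :
  (forall rho : M -> M -> Prop,
      right_congruence rho -> finite_index rho ->
      (forall x y, Lrel x y -> rho x y) -> rho d e) /\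
  ~ Lrel d e /\
  ~ L_action_residually_finite.
Proof.
  split; [exact part1|]. split; [exact part2|].
  intro H. destruct (H d e part2) as [rho [Hr [Hf [HL Hn]]]].
  apply Hn, part1; auto.
Qed.
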